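(* Let $\mathcal{G}$ be a causal diagram with action $X\in\mathbf{O}$ and latent reward $Y\in\mathbf{L}$ that is a descendant of $X$, and let $\Pi$ be a policy space over $X$. If $\mathrm{pa}(X)_{\mathcal{G}} \subseteq \mathrm{Pa}(\Pi)$ and there is no bidirected arrow incident to $X$ in $\mathcal{G}$, then $P(y)$ is imitable with respect to $\langle\mathcal{G},\Pi\rangle$. Moreover, an imitating policy $\pi\in\Pi$ is given by $\pi(x\mid \mathrm{pa}(\Pi)) = P(x \mid \mathrm{pa}(X)_{\mathcal{G}})$.
   Context: A structural causal model (SCM) $M = \langle \mathbf{U}, \mathbf{V}, \mathcal{F}, P(\mathbf{u})\rangle$ has exogenous variables $\mathbf{U}$ drawn from $P(\mathbf{u})$, endogenous variables $\mathbf{V}$, and for each $V\in\mathbf{V}$ a function $V \leftarrow f_V(\mathrm{Pa}_V, U_V)$ with $\mathrm{Pa}_V \subseteq \mathbf{V}$, $U_V \subseteq \mathbf{U}$. A partially observable SCM (POSCM) is $\langle M, \mathbf{O}, \mathbf{L}\rangle$ with $\mathbf{O},\mathbf{L}$ a partition of $\mathbf{V}$ into observed and latent endogenous variables; $P(\mathbf{o})$ is the observational distribution. The causal diagram $\mathcal{G}$ of $M$ is the acyclic graph on $\mathbf{V}$ with an arrow $V_j \to V_i$ whenever $V_j \in \mathrm{Pa}_{V_i}$ and a bidirected arrow $V_i \leftrightarrow V_j$ whenever $U_{V_i}\cap U_{V_j}\neq\emptyset$; $\mathcal{M}_{\langle\mathcal{G}\rangle}$ is the class of POSCMs with causal diagram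 $\mathcal{G}$; $\mathrm{pa}(X)_{\mathcal{G}}$ is the set of parents of $X$ via directed arrows. $\mathcal{G}_{\overline{X}}$ is $\mathcal{G}$ with arrows into $X$ removed. A policy space $\Pi$ is determined by a covariate set $\mathrm{Pa}(\Pi) \subseteq \mathbf{O}\setminus \mathrm{De}(X)_{\mathcal{G}_{\overline{X}}}$ and consists of all maps $\pi(x\mid \mathrm{pa}(\Pi))$ from values of $\mathrm{Pa}(\Pi)$ to distributions over $X$. The intervention $\mathrm{do}(\pi)$ replaces $f_X$ by drawing $X$ from $\pi$, giving $P(\mathbf{v}\mid \mathrm{do}(\pi)) = \sum_{\mathbf{u}} P(\mathbf{u}) \prod_{V\neq X} P(v\mid \mathrm{pa}_V, u_V)\,\pi(x\mid \mathrm{pa}(\Pi))$. For $\mathbf{Y}\subseteq \mathbf{V}$, $P(\mathbf{y})$ is imitable w.r.t. $\langle\mathcal{G},\Pi\rangle$ if there is a policy $\pi\in\Pi$ uniquely computable from $P(\mathbf{o})$ such that $P(\mathbf{y}\mid \mathrm{do}(\pi);M) = P(\mathbf{y};M)$ for every $M\in\mathcal{M}_{\langle\mathcal{G}\rangle}$; such $\pi$ is an imitating policy. *)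

(* Defs.v *)
From HB Require Import structures.
From mathcomp Require Import all_boot all_order all_algebra.
From mathcomp Require Import reals.
Set Implicit Arguments. Unset Strict Implicit. Unset Printing Implicit Defensive.
Import Order.TTheory GRing.Theory Num.Theory.
Local Open Scope ring_scope.

(* Endogenous variables are indexed by 'I_n; variable i ranges over the
   finite domain D i.  A (full) assignment of values to V: *)
Definition asg (n : nat) (D : 'I_n -> finType) := {dffun forall i : 'I_n, D i}.

(* A causal diagram on V = 'I_n : [dir j i] means the arrow V_j -> V_i,
   [bidir i j] means the bidirected arrow V_i <-> V_j. *)
Definition acyclic (n : nat) (dir : rel 'I_n) : Prop :=
  forall i j, dir i j -> ~~ connect dir j i.

Definition paG (n : nat) (dir : rel 'I_n) (X : 'I_n) : {set 'I_n} :=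
  [set j | dir j X].

Definition De (n : nat) (dir : rel 'I_n) (X : 'I_n) : {set 'I_n} :=
  [set j | connect dir X j].

Definition cut_into (n : nat) (dir : rel 'I_n) (X : 'I_n) : rel 'I_n :=
  fun a b => dir a b && (b != X).

(* Exogenous variables are indexed by a finite type UI, U_k ranging over UD k,
   mutually independent with marginals PU k; P(u) = prod_k PU k (u k). *)
Unset Implicit Arguments.
Record SCM (R : realType) (n : nat) (D : 'I_n -> finType) := {
  UI : finType;
  UD : UI -> finType;
  PU : forall k : UI, UD k -> R;
  PU_ge0 : forall k x, 0 <= PU k x;
  PU_sum1 : forall k, \sum_(x : UD k) PU k x = 1;
  paV : 'I_n -> {set 'I_n};
  uV : 'I_n -> {set UI};
  fV : forall i : 'I_n, asg D -> {dffun forall k : UI, UD k} -> D i;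
  fV_local : forall i (v v' : asg D) (u u' : {dffun forall k : UI, UD k}),
      (forall j, j \in paV i -> v j = v' j) ->
      (forall k, k \in uV i -> u k = u' k) ->
      fV i v u = fV i v' u'
}.
Set Implicit Arguments.
Arguments SCM R {n} D.
Arguments UI {R n D} _.
Arguments UD {R n D} _ _.
Arguments PU {R n D} _ _ _.
Arguments paV {R n D} _ _.
Arguments uV {R n D} _ _.
Arguments fV {R n D} _ _ _ _.

Section SCMdefs.
Variables (R : realType) (n : nat) (D : 'I_n -> finType).

Definition uasg (M : SCM R D) := {dffun forall k : UI M, UD M k}.

Definition Pu (M : SCM R D) (u : uasg M) : R := \prod_k PU M k (u k).

Definition Pv (M : SCM R D) (v : asg D) : R :=
  \sum_(u : uasg M) Pu u * \prod_(i : 'I_n) (v i == fV M i v u)%:R.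

Definition has_diagram (M : SCM R D) (dir bidir : rel 'I_n) : Prop :=
  (forall i j, dir j i <-> j \in paV M i) /\
  (forall i j, bidir i j <-> (i != j) /\ (uV M i :&: uV M j != set0)).

(* a policy for action X : a map from assignments to (unnormalised) weights
   on the values of X; membership in the policy space with covariates PaPi *)
Definition policy (X : 'I_n) := asg D -> D X -> R.

Definition in_policy_space (PaPi : {set 'I_n}) (X : 'I_n) (pol : policy X) : Prop :=
  [/\ forall v v' : asg D, (forall i, i \in PaPi -> v i = v' i) -> pol v = pol v',
      forall v x, 0 <= pol v x &
      forall v, \sum_(x : D X) pol v x = 1].

Definition Pdo (M : SCM R D) (X : 'I_n) (pol : policy X) (v : asg D) : R :=
  \sum_(u : uasg M) Pu u * (\prod_(i : 'I_n | i != X) (v i == fV M i v u)%:R)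
                        * pol v (v X).

Definition PY (M : SCM R D) (Y : 'I_n) (y : D Y) : R :=
  \sum_(v : asg D) (v Y == y)%:R * Pv M v.
Definition PYdo (M : SCM R D) (X : 'I_n) (pol : policy X) (Y : 'I_n) (y : D Y) : R :=
  \sum_(v : asg D) (v Y == y)%:R * Pdo M pol v.

(* marginal of P over the variables S, evaluated at the values of v on S *)
Definition marg (M : SCM R D) (S : {set 'I_n}) (v : asg D) : R :=
  \sum_(w : asg D) [forall i in S, w i == v i]%:R * Pv M w.
Definition margx (M : SCM R D) (S : {set 'I_n}) (X : 'I_n) (x : D X) (v : asg D) : R :=
  \sum_(w : asg D) ([forall i in S, w i == v i] && (w X == x))%:R * Pv M w.

Definition Pobs (M : SCM R D) (O : {set 'I_n}) : asg D -> R := marg M O.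

(* P(y) imitable w.r.t. <G, Pi>: a policy in Pi, computed from P(o) alone
   (through a map Phi applied to P(o)), reproducing P(y) in every model of
   the class M_<G>. *)
Definition imitable (dir bidir : rel 'I_n) (O : {set 'I_n}) (X : 'I_n)
    (PaPi : {set 'I_n}) (Y : 'I_n) : Prop :=
  exists Phi : (asg D -> R) -> policy X,
    forall M : SCM R D, has_diagram M dir bidir ->
      in_policy_space PaPi (Phi (Pobs M O)) /\
      forall y : D Y, PYdo M (Phi (Pobs M O)) y = PY M y.

End SCMdefs.

(* Main.v *)
Require Import Defs.
From HB Require Import structures.
From mathcomp Require Import all_boot all_order all_algebra.
From mathcomp Require Import reals.
From mathcomp Require Import ring.
Set Implicit Arguments. Unset Strict Implicit. Unset Printing Implicit Defensive.
Import Order.TTheory GRing.Theory Num.Theory.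
Local Open Scope ring_scope.

Notation agr S w v := [forall i in S, w i == v i].

Section Gen.
Variables (R : realType) (n : nat) (D : 'I_n -> finType).

Lemma sum_ind1 (T : finType) (a : T) (c : T -> R) :
  \sum_x (a == x)%:R * c x = c a.
Proof.
rewrite (bigD1 a) //= eqxx mul1r big1 ?addr0 // => x xa.
by rewrite eq_sym (negbTE xa) mul0r.
Qed.

Lemma prod_ind (T : finType) (P : pred T) (b : pred T) :
  \prod_(i | P i) ((b i)%:R : R) = ([forall i, P i ==> b i])%:R.
Proof.
case: forallP => H.
  by rewrite big1 // => i Pi; move/implyP: (H i) => /(_ Pi) ->.
have [i Hi] : exists i, ~~ (P i ==> b i).
  by apply/existsP; rewrite -negb_forall; apply/forallP.
move: Hi; rewrite negb_imply => /andP [Pi /negbTE bi].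
by rewrite (bigD1 i) //= bi mul0r.
Qed.

Variable M : SCM R D.

Lemma Pu_ge0 (u : uasg M) : 0 <= Pu u.
Proof. by apply: prodr_ge0 => k _; apply: PU_ge0. Qed.

Lemma Pv_ge0 v : 0 <= Pv M v.
Proof. by apply: sumr_ge0 => u _; apply: mulr_ge0; [apply: Pu_ge0| apply: prodr_ge0 => *; apply: ler0n]. Qed.

Lemma indep (S : {set UI M}) (A B : uasg M -> R) :
 (forall u u' : uasg M, (forall k, k \in S -> u k = u' k) -> A u = A u') ->
 (forall u u' : uasg M, (forall k, k \notin S -> u k = u' k) -> B u = B u') ->
 (\sum_(u : uasg M) Pu u * A u * B u) * (\sum_(u : uasg M) Pu u) = (\sum_(u : uasg M) Pu u * A u) * (\sum_(u : uasg M) Pu u * B u).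
Proof.
move=> HA HB.
pose mix (a b : uasg M) : uasg M := [ffun k => if k \in S then a k else b k].
pose h (p : uasg M * uasg M) := (mix p.1 p.2, mix p.2 p.1).
have hh : forall p, h (h p) = p.
  move=> [a b]; rewrite /h /=; congr pair; apply/ffunP => k; rewrite !ffunE;
  by case: (k \in S).
rewrite mulr_suml mulr_suml.
under eq_bigr do rewrite mulr_sumr.
under [RHS]eq_bigr do rewrite mulr_sumr.
rewrite !pair_bigA /=.
rewrite (reindex_inj (h := h)); last exact: (can_inj hh).
apply: eq_bigr => -[a b] _ /=.
have -> : A (mix a b) = A a by apply: HA => k kS; rewrite ffunE kS.
have -> : B (mix a b) = B b by apply: HB => k kS; rewrite ffunE (negbTE kS).
have E : Pu (mix a b) * Pu (mix b a) = Pu a * Pu b.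
  rewrite /Pu -!big_split /=; apply: eq_bigr => k _; rewrite !ffunE.
  by case: (k \in S) => //; rewrite mulrC.
transitivity (Pu (mix a b) * Pu (mix b a) * A a * B b); first by ring.
by rewrite E; ring.
Qed.

Section Struct.
Local Open Scope nat_scope.
Variables (dir : rel 'I_n) (X : 'I_n).
Hypothesis acyc : acyclic dir.
Hypothesis hdir : forall i j, dir j i <-> j \in paV M i.

Definition solves (u : uasg M) (w : asg D) := forall i, i != X -> w i = fV M i w u.

Definition rank (i : 'I_n) := #|[set j | connect dir j i]|.

Lemma rank_gt0 i : 0 < rank i.
Proof. by apply/card_gt0P; exists i; rewrite inE connect0. Qed.

Lemma rank_lt p i : dir p i -> rank p < rank i.
Proof.
move=> dpi; rewrite /rank; apply: proper_card; apply/properP; split.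
  apply/subsetP => j; rewrite !inE => cjp; exact: connect_trans cjp (connect1 dpi).
by exists i; rewrite !inE ?connect0 //; apply: acyc.
Qed.

Lemma agree u (w w' : asg D) : solves u w -> solves u w' ->
  forall i, (w X = w' X \/ ~~ connect dir X i) -> w i = w' i.
Proof.
move=> sw sw'.
suff H : forall k i, rank i < k -> (w X = w' X \/ ~~ connect dir X i) -> w i = w' i.
  by move=> i; apply: (H (rank i).+1).
elim=> [//|k IH] i; rewrite ltnS => rk hc.
have [iX|iX] := eqVneq i X.
  by subst i; case: hc => // /negP; rewrite connect0.
rewrite (sw i iX) (sw' i iX); apply: fV_local => // j /hdir dji.
apply: IH; first exact: leq_trans (rank_lt dji) rk.
case: hc => [|nc]; [by left | right].
by apply: contra nc => cXj; exact: connect_trans cXj (connect1 dji).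
Qed.

Fixpoint it (u : uasg M) (x : D X) (w0 : asg D) (k : nat) : asg D :=
  if k is k'.+1 then [ffun i => dfwith (fun j => fV M j (it u x w0 k') u) x i] else w0.

Lemma exists_sol u (x : D X) (w0 : asg D) : exists w : asg D, w X = x /\ solves u w.
Proof.
have itX k : it u x w0 k.+1 X = x by rewrite /= ffunE dfwith_in.
have itN k i : i != X -> it u x w0 k.+1 i = fV M i (it u x w0 k) u.
  by move=> iX; rewrite /= ffunE dfwith_out // eq_sym.
have stab : forall k i, rank i <= k -> it u x w0 k.+1 i = it u x w0 k.+2 i.
  elim=> [|k IH] i rk; first by move: (rank_gt0 i); rewrite leqNgt ltnS rk.
  have [iX|iX] := eqVneq i X; first by subst i; rewrite !itX.
  rewrite !(itN _ _ iX); apply: fV_local => // j /hdir dji.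
  by apply: IH; rewrite -ltnS; exact: leq_trans (rank_lt dji) rk.
exists (it u x w0 n.+1); split; first exact: itX.
move=> i iX; rewrite stab ?itN //.
by rewrite /rank; apply: leq_trans (max_card _) _; rewrite card_ord.
Qed.
End Struct.

Lemma natr_andb (a b : bool) : ((a && b)%:R : R) = a%:R * b%:R.
Proof. by case: a; case: b; rewrite /= ?mul1r ?mul0r. Qed.

Section Main.
Variables (dir : rel 'I_n) (X : 'I_n).
Hypothesis acyc : acyclic dir.
Hypothesis hdir : forall i j, dir j i <-> j \in paV M i.
Hypothesis hbid : forall j, j != X -> forall k, k \in uV M j -> k \notin uV M X.
Variable pol : policy R D X.
Hypothesis hpol : forall (v : asg D) (x : D X), marg M (paG dir X) v != 0 ->
        pol v x = margx M (paG dir X) x v / marg M (paG dir X) v.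

Let pa := paG dir X.
Let E (u : uasg M) (w : asg D) : R := \prod_(i | i != X) (w i == fV M i w u)%:R.
Let eX (u : uasg M) (w : asg D) : R := (w X == fV M X w u)%:R.
Let Z := \sum_(u : uasg M) Pu u.
Let Rw w := \sum_(u : uasg M) Pu u * E u w.
Let qw w := \sum_(u : uasg M) Pu u * eX u w.

Lemma Pv_split w : Pv M w * Z = qw w * Rw w.
Proof.
rewrite -(@indep (uV M X) (fun u => eX u w) (fun u => E u w)).
- congr (_ * _); apply: eq_bigr => u _; by rewrite (bigD1 X) //= mulrA.
- move=> u u' H; rewrite /eX; congr ((_ == _)%:R); exact: fV_local.
- move=> u u' H; apply: eq_bigr => i iX; congr ((_ == _)%:R).
  apply: fV_local => [j _ //|k ki]; apply: H; exact: (hbid iX ki).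
Qed.

Lemma Pdo_split w : Pdo M pol w = Rw w * pol w (w X).
Proof. by rewrite /Pdo mulr_suml. Qed.

Lemma E_ge0 u w : 0 <= E u w.
Proof. by apply: prodr_ge0 => *; apply: ler0n. Qed.

Lemma Rw_ge0 w : 0 <= Rw w.
Proof. by apply: sumr_ge0 => u _; apply: mulr_ge0; [apply: Pu_ge0|apply: E_ge0]. Qed.

Lemma fX_pa u (w v : asg D) : agr pa w v -> fV M X w u = fV M X v u.
Proof.
move/forall_inP => H; apply: fV_local => // j /hdir djX.
by apply/eqP; apply: H; rewrite /pa /paG inE.
Qed.

Variable v : asg D.

Let c u x := \sum_(w : asg D) (agr pa w v && (w X == x))%:R * E u w.

Lemma c_const u x x' : c u x = c u x'.
Proof.
have cE : forall x, exists w1 : asg D,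
    solves X u w1 /\ c u x = (agr pa w1 v)%:R.
  move=> y; have [w1 [w1X sw1]] := exists_sol acyc hdir u y v.
  exists w1; split=> //.
  rewrite /c (bigD1 w1) //= w1X eqxx andbT.
  have -> : E u w1 = 1.
    rewrite /E prod_ind; suff -> : [forall i, (i != X) ==> (w1 i == fV M i w1 u)] by [].
    by apply/forallP => i; apply/implyP => iX; rewrite -(sw1 i iX).
  rewrite mulr1 big1 ?addr0 // => w ww1.
  case: (boolP (w X == y)) => wX; last by rewrite andbF mul0r.
  rewrite /E prod_ind; case: forallP => H; last by rewrite mulr0.
  exfalso; move/eqP: ww1; apply; apply/ffunP => i.
  apply: (agree (X:=X) (u:=u) acyc hdir) => //.
  - by move=> j jX; apply/eqP; exact: (implyP (H j) jX).
  - by left; rewrite w1X; exact/eqP.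
have [w1 [s1 ->]] := cE x; have [w2 [s2 ->]] := cE x'.
have e12 : forall i, i \in pa -> w1 i = w2 i.
  move=> i; rewrite /pa /paG inE => diX.
  by apply: (agree (X:=X) acyc hdir s1 s2); right; apply: acyc.
suff -> : agr pa w1 v = agr pa w2 v by [].
apply/idP/idP => /forall_inP H; apply/forall_inP => i ipa.
  by rewrite -(e12 i ipa); exact: H.
by rewrite (e12 i ipa); exact: H.
Qed.


Let q (x : D X) := \sum_(u : uasg M) Pu u * (x == fV M X v u)%:R.
Let Sx (x : D X) := \sum_(w : asg D) (agr pa w v && (w X == x))%:R * Rw w.

Lemma Sx_c x : Sx x = \sum_(u : uasg M) Pu u * c u x.
Proof.
rewrite /Sx /c; under eq_bigr do rewrite mulr_sumr.
rewrite exchange_big /=; apply: eq_bigr => u _; rewrite mulr_sumr.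
by apply: eq_bigr => w _; rewrite mulrCA.
Qed.

Lemma Sx_const x : Sx x = Sx (v X).
Proof. by rewrite !Sx_c; apply: eq_bigr => u _; rewrite (c_const u x (v X)). Qed.

Lemma margx_Z x : margx M pa x v * Z = q x * Sx x.
Proof.
rewrite /margx mulr_suml /Sx mulr_sumr; apply: eq_bigr => w _.
rewrite -mulrA Pv_split.
case: (boolP (agr pa w v && (w X == x))) => [/andP [hw /eqP wX]|_]; last by rewrite !mul0r mulr0.
rewrite !mul1r; congr (_ * _).
by rewrite /qw /q; apply: eq_bigr => u _; rewrite /eX wX (fX_pa u hw).
Qed.

Lemma sum_q : \sum_x q x = Z.
Proof.
rewrite /q exchange_big /=; apply: eq_bigr => u _; rewrite -mulr_sumr.
under eq_bigr do rewrite eq_sym.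
by rewrite -[RHS]mulr1; congr (_ * _); rewrite -[RHS](sum_ind1 (fV M X v u) (fun _ => 1));
  apply: eq_bigr => x _; rewrite mulr1.
Qed.

Lemma marg_Z : marg M pa v * Z = Z * Sx (v X).
Proof.
have -> : marg M pa v = \sum_(x : D X) margx M pa x v.
  rewrite /marg /margx exchange_big /=; apply: eq_bigr => w _.
  under [RHS]eq_bigr do rewrite natr_andb -mulrA.
  rewrite -mulr_sumr; congr (_ * _).
  by rewrite (sum_ind1 (w X) (fun _ => Pv M w)).
rewrite mulr_suml; under eq_bigr do rewrite margx_Z Sx_const.
by rewrite -mulr_suml sum_q.
Qed.

Lemma Pdo_Pv : Pdo M pol v = Pv M v.
Proof.
have [Z0|Z0] := eqVneq Z 0.
  have Pu0 := psumr_eq0P (fun u _ => Pu_ge0 u) Z0.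
  by rewrite /Pdo /Pv !big1 // => u _; rewrite Pu0 // !mul0r.
have PvE : Pv M v = qw v * Rw v / Z by rewrite -Pv_split mulfK.
rewrite Pdo_split PvE.
have [R0|R0] := eqVneq (Rw v) 0; first by rewrite R0 !(mul0r, mulr0).
have Spos : Sx (v X) != 0.
  have : Rw v <= Sx (v X).
    rewrite /Sx (bigD1 v) //= eqxx andbT.
    have -> : agr pa v v by apply/forall_inP.
    rewrite mul1r lerDl; apply: sumr_ge0 => w _; apply: mulr_ge0; [exact: ler0n| exact: Rw_ge0].
  move=> le; rewrite gt_eqF //; apply: lt_le_trans le; by rewrite lt_def R0 Rw_ge0.
have mE : marg M pa v = Sx (v X).
  by apply: (mulIf Z0); rewrite marg_Z mulrC.
have mxE : margx M pa (v X) v = q (v X) * Sx (v X) / Z by rewrite -margx_Z mulfK.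
rewrite hpol ?mE // mxE.
have -> : qw v = q (v X) by [].
by field; rewrite Z0 Spos.
Qed.
End Main.

Lemma agr_sym (S : {set 'I_n}) (a b : asg D) : agr S a b = agr S b a.
Proof. by apply/idP/idP => /forall_inP H; apply/forall_inP => i iS; rewrite eq_sym H. Qed.

Lemma agr_trans (S : {set 'I_n}) (a b c : asg D) : agr S a b -> agr S b c -> agr S a c.
Proof.
move=> /forall_inP H1 /forall_inP H2; apply/forall_inP => i iS.
by rewrite (eqP (H1 i iS)) H2.
Qed.

Definition cO (O : {set 'I_n}) (w : asg D) : R := \sum_(w' : asg D) (agr O w' w)%:R.

Lemma cO_eq (O : {set 'I_n}) (w w' : asg D) : agr O w' w -> cO O w = cO O w'.
Proof.
move=> h; apply: eq_bigr => z _.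
suff -> : agr O z w = agr O z w' by [].
apply/idP/idP => hz; first by apply: agr_trans hz _; rewrite agr_sym.
exact: agr_trans hz h.
Qed.

Lemma cO_neq0 (O : {set 'I_n}) (w : asg D) : cO O w != 0.
Proof.
rewrite /cO (bigD1 w) //= gt_eqF // ltr_pwDl ?sumr_ge0 //.
by have -> : agr O w w by apply/forall_inP.
Qed.

Lemma obs_sum (O : {set 'I_n}) (P : pred (asg D)) :
  (forall w w' : asg D, agr O w w' -> P w = P w') ->
  \sum_(w : asg D) (P w)%:R * (marg M O w / cO O w) = \sum_(w : asg D) (P w)%:R * Pv M w.
Proof.
move=> HP; rewrite /marg.
under eq_bigr do rewrite mulr_suml mulr_sumr.
rewrite exchange_big /=; apply: eq_bigr => w' _.
transitivity (\sum_(w : asg D) (agr O w' w)%:R * ((P w')%:R * Pv M w' / cO O w')).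
  apply: eq_bigr => w _; case: (boolP (agr O w' w)) => h; last by rewrite !mul0r mulr0.
  rewrite -(HP w' w h) (cO_eq h); ring.
rewrite -mulr_suml.
have -> : \sum_(w : asg D) ((agr O w' w)%:R : R) = cO O w'.
  by apply: eq_bigr => z _; rewrite agr_sym.
by rewrite mulrC divfK // cO_neq0.
Qed.
End Gen.

Definition PhiK (R : realType) (n : nat) (D : 'I_n -> finType) (O : {set 'I_n}) (X : 'I_n)
   (g : asg D -> R) (K : {set asg D}) (x : D X) : R :=
  let b := \sum_(w : asg D) (w \in K)%:R * (g w / @cO R n D O w) in
  let a := \sum_(w : asg D) ((w \in K) && (w X == x))%:R * (g w / @cO R n D O w) in
  if b != 0 then a / b else (#|D X|%:R)^-1.

Definition Phi (R : realType) (n : nat) (D : 'I_n -> finType) (pa O : {set 'I_n}) (X : 'I_n)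
   (g : asg D -> R) : policy R D X :=
  fun v => @PhiK R n D O X g [set w : asg D | agr pa w v].

Lemma Phi_space (R : realType) (n : nat) (D : 'I_n -> finType) (pa O PaPi : {set 'I_n})
  (X : 'I_n) (g : asg D -> R) :
  pa \subset PaPi -> (forall w, 0 <= g w) -> in_policy_space PaPi (@Phi R n D pa O X g).
Proof.
move=> sub g0; have cO0 : forall w, 0 <= @cO R n D O w.
  by move=> w; apply: sumr_ge0 => *; apply: ler0n.
split.
- move=> v v' H; rewrite /Phi; congr (PhiK _ _ _); apply/setP => w; rewrite !inE.
  apply/idP/idP => /forall_inP Hw; apply/forall_inP => i ipa;
    have e := H i (subsetP sub i ipa).
    by rewrite -e Hw.
  by rewrite e Hw.
- move=> v x; rewrite /Phi /PhiK /=; case: ifP => _; last by rewrite invr_ge0 ler0n.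
  by apply: divr_ge0; apply: sumr_ge0 => w _; apply: mulr_ge0 => //; apply: divr_ge0.
- move=> v; rewrite /Phi /PhiK /=.
  have [hb|hb] := boolP (\sum_(w : asg D) (w \in [set w0 : asg D | agr pa w0 v])%:R * (g w / @cO R n D O w) != 0);
    rewrite ?hb.
    rewrite -mulr_suml exchange_big /=.
    have Ha : forall (K : {set asg D}) (w : asg D), \sum_(x : D X) ((w \in K) && (w X == x))%:R * (g w / @cO R n D O w)
        = (w \in K)%:R * (g w / @cO R n D O w).
      move=> K w; under eq_bigr do rewrite natr_andb -mulrA.
      by rewrite -mulr_sumr (sum_ind1 (w X) (fun _ => g w / @cO R n D O w)).
    under eq_bigr do rewrite Ha.
    by rewrite mulfV.
  have -> : \sum_(x : D X) (#|D X|%:R : R)^-1 = #|D X|%:R * (#|D X|%:R)^-1 by rewrite sumr_const mulr_natl.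
  rewrite mulfV // pnatr_eq0 -lt0n.
  by apply/card_gt0P; exists (v X).
Qed.

Unset Implicit Arguments.
Theorem theorem1 (R : realType) (n : nat) (D : 'I_n -> finType)
    (dir bidir : rel 'I_n) (O : {set 'I_n}) (X Y : 'I_n) (PaPi : {set 'I_n}) :
  acyclic dir ->
  X \in O ->
  Y \notin O ->
  Y \in De dir X ->
  PaPi \subset O :\: De (cut_into dir X) X ->
  paG dir X \subset PaPi ->
  (forall j, ~~ bidir X j /\ ~~ bidir j X) ->
  imitable R D dir bidir O X PaPi Y /\
  (forall (M : SCM R D), has_diagram M dir bidir ->
     forall pol : policy R D X, in_policy_space PaPi pol ->
     (forall (v : asg D) (x : D X), marg M (paG dir X) v != 0 ->
        pol v x = margx M (paG dir X) x v / marg M (paG dir X) v) ->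
     forall y : D Y, PYdo M pol y = PY M y).
Proof.
move=> acyc XO YO YDe PaPiO paPaPi nobid.
have paO : paG dir X \subset O.
  by apply: subset_trans paPaPi (subset_trans PaPiO _); exact: subsetDl.
have part2 : forall (M : SCM R D), has_diagram M dir bidir ->
     forall pol : policy R D X, in_policy_space PaPi pol ->
     (forall (v : asg D) (x : D X), marg M (paG dir X) v != 0 ->
        pol v x = margx M (paG dir X) x v / marg M (paG dir X) v) ->
     forall y : D Y, PYdo M pol y = PY M y.
  move=> M [hd hb] pol _ hpol y; rewrite /PYdo /PY; apply: eq_bigr => v _; congr (_ * _).
  apply: (Pdo_Pv acyc) => //.
  move=> j jX k kj; apply/negP => kX.
  have : bidir X j.
    by apply/hb; split; [rewrite eq_sym | apply/set0Pn; exists k; rewrite inE kX kj].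
  by rewrite (negbTE (nobid j).1).
split => //.
exists (@Phi R n D (paG dir X) O X) => M hM.
have hsp : in_policy_space PaPi (@Phi R n D (paG dir X) O X (Pobs M O)).
  apply: Phi_space => // w; apply: sumr_ge0 => w' _; apply: mulr_ge0; [exact: ler0n | exact: Pv_ge0].
split => //.
apply: part2 => // v x hm.
rewrite /Phi /PhiK.
have HP1 : forall w w' : asg D, agr O w w' -> agr (paG dir X) w v = agr (paG dir X) w' v.
  move=> w w' /forall_inP h; apply/idP/idP => /forall_inP H; apply/forall_inP => i ipa;
    have e := h i (subsetP paO i ipa).
    by rewrite -(eqP e); exact: H.
  by rewrite (eqP e); exact: H.
have HP2 : forall w w' : asg D, agr O w w' ->
    (agr (paG dir X) w v && (w X == x)) = (agr (paG dir X) w' v && (w' X == x)).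
  move=> w w' h; rewrite (HP1 w w' h); congr (_ && _).
  by move/forall_inP: h => /(_ X XO) /eqP ->.
have eb : \sum_(w : asg D) (w \in [set w0 : asg D | agr (paG dir X) w0 v])%:R
    * (Pobs M O w / @cO R n D O w) = marg M (paG dir X) v.
  have := @obs_sum R n D M O (fun w => agr (paG dir X) w v) HP1.
  rewrite /= /marg => <-; apply: eq_bigr => w _; by rewrite inE.
have ea : \sum_(w : asg D) ((w \in [set w0 : asg D | agr (paG dir X) w0 v]) && (w X == x))%:R
    * (Pobs M O w / @cO R n D O w) = margx M (paG dir X) x v.
  have := @obs_sum R n D M O (fun w => agr (paG dir X) w v && (w X == x)) HP2.
  rewrite /= /margx => <-; apply: eq_bigr => w _; by rewrite inE.
by rewrite eb ea hm.
Qed.
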